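(* Consider the following optical-network model. Each link $k$ has a set $A_k\subseteq\mathbb{Z}$ of available units. Each trait $t$ has a resource $\mathrm{RI}(t)$, a nonempty integer interval, and for each link $k$ the set $t\oplus k$ of derived traits satisfies: every $t'\in t\oplus k$ has $\mathrm{RI}(t')$ a maximal integer interval contained in $\mathrm{RI}(t)\cap A_k$, and for every maximal integer interval $J\subseteq \mathrm{RI}(t)\cap A_k$ there is $t'\in t\oplus k$ with $\mathrm{RI}(t')=J$. Fix a link $k$ and, for a label $l=(t_a,t_b)$ whose routes end at different nodes, let $l\oplus e=\{(t,t_b): t\in t_a\oplus k\}$, the resulting routes still ending at different nodes. Let $\mathrm{cost}$ be a real-valued function on labels such that for any labels $l_i,l_j$: if $\mathrm{cost}(l_i)\le\mathrm{cost}(l_j)$ then $\mathrm{cost}(l')\le\mathrm{cost}(l)$ for all $l'\in l_i\oplus e$ and all $l\in l_j\oplus e$. Let $l_i=(t_{i,a},t_{i,b})$, $l_j=(t_{j,a},t_{j,b})$ be labels. If $l_i\preceq'_{\ne} l_j$, then for every $l\in l_j\oplus e$ there exists $l'\in l_i\oplus e$ with $l'\preceq'_{\ne} l$.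
   Context: A trait describes a route (sequence of neighboring links) in an optical network together with its cost and the interval of contiguous frequency slot units available on all its links; $t\oplus k$ is the set of traits obtained by appending link $k$. A label is a pair of traits of two link-disjoint routes. For labels $l_i=(t_{i,a},t_{i,b})$, $l_j=(t_{j,a},t_{j,b})$ whose routes end at different nodes: $\mathrm{RI}(l_i)\supseteq_{\ne}\mathrm{RI}(l_j)$ iff $\mathrm{RI}(t_{i,a})\supseteq\mathrm{RI}(t_{j,a})$ and $\mathrm{RI}(t_{i,b})\supseteq\mathrm{RI}(t_{j,b})$; and $l_i\preceq'_{\ne} l_j$ iff $\mathrm{cost}(l_i)\le\mathrm{cost}(l_j)$ and $\mathrm{RI}(l_i)\supseteq_{\ne}\mathrm{RI}(l_j)$. *)

(* Defs.v *)
From Stdlib Require Import ZArith Reals.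
Open Scope Z_scope.

Definition zset := Z -> Prop.

Definition subset (X Y : zset) : Prop := forall x, X x -> Y x.
Definition same_set (X Y : zset) : Prop := forall x, X x <-> Y x.
Definition inter (X Y : zset) : zset := fun x => X x /\ Y x.

Definition is_interval (X : zset) : Prop :=
  exists a b : Z, a <= b /\ forall x, X x <-> a <= x <= b.

Definition max_interval_in (J X : zset) : Prop :=
  is_interval J /\ subset J X /\
  forall J', is_interval J' -> subset J J' -> subset J' X -> subset J' J.

Definition label (Trait : Type) := (Trait * Trait)%type.

(* l (+) e : extend the first route of the label by the fixed link,
   given ext_k t = the set t (+) k. *)
Definition label_ext {Trait : Type} (ext_k : Trait -> Trait -> Prop)
  (l l' : label Trait) : Prop :=
  exists t, ext_k (fst l) t /\ l' = (t, snd l).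

Definition RI_sup {Trait : Type} (RI : Trait -> zset) (li lj : label Trait) : Prop :=
  subset (RI (fst lj)) (RI (fst li)) /\ subset (RI (snd lj)) (RI (snd li)).

Definition prec' {Trait : Type} (RI : Trait -> zset) (cost : label Trait -> R)
  (li lj : label Trait) : Prop :=
  (cost li <= cost lj)%R /\ RI_sup RI li lj.

(* Main.v *)
Require Import Defs.
From Stdlib Require Import ZArith Reals Lia Classical.
Open Scope Z_scope.

Lemma zmin_exists_aux (P : Z -> Prop) (a : Z) (Hb : forall x, P x -> a <= x) :
  forall n : nat, forall c, c - a <= Z.of_nat n -> P c ->
  exists m, P m /\ forall x, P x -> m <= x.
Proof.
  induction n as [|n IH]; intros c Hc Pc.
  - exists c; split; auto. intros x Px. pose proof (Hb x Px). pose proof (Hb c Pc). lia.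
  - destruct (classic (exists x, P x /\ x < c)) as [[x [Px Hx]]|H].
    + apply (IH x); auto. specialize (Hb c Pc). lia.
    + exists c; split; auto. intros x Px. destruct (Z_lt_le_dec x c); auto.
      exfalso; apply H; eauto.
Qed.

Lemma zmin_exists (P : Z -> Prop) (a c : Z) (Hb : forall x, P x -> a <= x) (Pc : P c) :
  exists m, P m /\ forall x, P x -> m <= x.
Proof.
  apply (zmin_exists_aux P a Hb (Z.to_nat (c - a)) c); auto.
  specialize (Hb c Pc). lia.
Qed.

Lemma extend_max (X : zset) (a b : Z) (J : zset)
  (HX : forall x, X x -> a <= x <= b) (HJ : is_interval J) (HJX : subset J X) :
  exists J', max_interval_in J' X /\ subset J J'.
Proof.
  destruct HJ as [c [d [Hcd HJ]]].
  assert (Xc : forall y, c <= y <= d -> X y) by (intros y Hy; apply HJX, HJ; auto).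
  set (P := fun x => x <= c /\ forall y, x <= y <= c -> X y).
  destruct (zmin_exists P a c) as [lo [[Hlo1 Hlo2] Hlo]].
  { intros x [Hx1 Hx2]. specialize (Hx2 x ltac:(lia)). apply HX in Hx2. lia. }
  { split; [lia|]. intros y Hy. apply Xc. lia. }
  set (Q := fun x => d <= - x /\ forall y, d <= y <= - x -> X y).
  destruct (zmin_exists Q (- b) (- d)) as [mhi [[Hm1 Hm2] Hm]].
  { intros x [Hx1 Hx2]. specialize (Hx2 (- x) ltac:(lia)). apply HX in Hx2. lia. }
  { split; [lia|]. intros y Hy. apply Xc. lia. }
  exists (fun x => lo <= x <= - mhi). split; [split; [|split]|].
  - exists lo, (- mhi). split; [lia|]. tauto.
  - intros x Hx. destruct (Z_le_dec x c).
    + apply Hlo2; lia.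
    + destruct (Z_le_dec x d); [apply Xc; lia|]. apply Hm2; lia.
  - intros J' [p [q [Hpq HJ']]] Hsub HJ'X x Hx.
    assert (Hp : p <= lo) by (apply HJ', Hsub; lia).
    assert (Hq : - mhi <= q) by (apply HJ', Hsub; lia).
    apply HJ' in Hx.
    assert (P p). { split; [lia|]. intros y Hy. apply HJ'X, HJ'. lia. }
    assert (Q (- q)). { split; [lia|]. intros y Hy. apply HJ'X, HJ'. lia. }
    apply Hlo in H. apply Hm in H0. lia.
  - intros x Hx. apply HJ in Hx. simpl. split.
    + apply Z.le_trans with c; lia.
    + apply Z.le_trans with d; lia.
Qed.

Theorem proposition4
  (Trait Link : Type)
  (A : Link -> zset)                        (* available units of each link *)
  (RI : Trait -> zset)                      (* resource of each trait *)
  (ext : Trait -> Link -> Trait -> Prop)    (* ext t k t' : t' \in t (+) k *)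
  (diff_ends : label Trait -> Prop)         (* the two routes end at different nodes *)
  (cost : label Trait -> R)
  (HRI : forall t, is_interval (RI t))
  (Hext_max : forall t k t', ext t k t' -> max_interval_in (RI t') (inter (RI t) (A k)))
  (Hext_all : forall t k J, max_interval_in J (inter (RI t) (A k)) ->
                exists t', ext t k t' /\ same_set (RI t') J)
  (k : Link)
  (Hdiff_ext : forall l l', diff_ends l -> label_ext (fun t t' => ext t k t') l l' ->
                 diff_ends l')
  (Hcost : forall li lj, diff_ends li -> diff_ends lj -> (cost li <= cost lj)%R ->
             forall l' l, label_ext (fun t t' => ext t k t') li l' ->
                          label_ext (fun t t' => ext t k t') lj l ->
                          (cost l' <= cost l)%R)
  (li lj : label Trait)
  (Hi : diff_ends li) (Hj : diff_ends lj)
  (Hprec : prec' RI cost li lj) :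
  forall l, label_ext (fun t t' => ext t k t') lj l ->
    exists l', label_ext (fun t t' => ext t k t') li l' /\ prec' RI cost l' l.
Proof.
  intros l Hl.
  destruct Hl as [t [Ht El]].
  destruct Hprec as [Hc [Hsa Hsb]].
  destruct (Hext_max _ _ _ Ht) as [HJ [HJsub _]].
  destruct (HRI (fst li)) as [a [b [_ Hab]]].
  destruct (extend_max (inter (RI (fst li)) (A k)) a b (RI t)) as [J' [HJ' HsJ']].
  - intros x [Hx _]. apply Hab; auto.
  - exact HJ.
  - intros x Hx. destruct (HJsub x Hx) as [H1 H2]. split; auto.
  - destruct (Hext_all _ _ _ HJ') as [t' [Ht' Hsame]].
    exists (t', snd li). split.
    + exists t'. split; auto.
    + split.
      * apply (Hcost li lj Hi Hj Hc); [exists t'; split; auto|].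
        exists t; split; auto.
      * subst l. split; simpl.
        -- intros x Hx. apply Hsame. auto.
        -- auto.
Qed.
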